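(* In the social learning model (for any signal distributions satisfying the standing assumptions), there exist $c>0$ and $0<\gamma<1$ such that for all $n>0$, $$\mathbb{P}(\Xi\ge n)\le c\,\gamma^n.$$
   Context: Social learning model. A state $\theta\in\{-1,+1\}$ is drawn with $\mathbb{P}(\theta=+1)=\mathbb{P}(\theta=-1)=1/2$. Agents $t=1,2,\dots$ receive private signals $s_t\in\mathbb{R}$ that are i.i.d. conditionally on $\theta$, with CDF $F_+$ if $\theta=+1$ and $F_-$ if $\theta=-1$; $F_+$ and $F_-$ are mutually absolutely continuous. Let $L_t=\log\frac{\mathbb{P}(\theta=+1\mid s_t)}{\mathbb{P}(\theta=-1\mid s_t)}$ be the private log-likelihood ratio, and let $G_+$, $G_-$ denote the CDFs of $L_t$ conditional on $\theta=+1$, $\theta=-1$ respectively. Signals are assumed unbounded: for every $M\in\mathbb{R}$, $\mathbb{P}(L_t>M)>0$ and $\mathbb{P}(L_t<-M)>0$. Agent $t$ observes $a_1,\dots,a_{t-1}$ and her own signal and chooses $a_t\in\{-1,+1\}$ (utility $1$ if $a_t=\theta$, else $0$). The public belief is $\mu_t=\mathbb{P}(\theta=+1\mid a_1,\dots,a_{t-1})$ and $\ell_t=\log\frac{\mu_t}{1-\mu_t}$ (so $\ell_1=0$). In equilibrium $a_t=+1$ iff $\ell_t+L_t>0$, and otherwise $a_t=-1$. Consequently $\ell_{t+1}=\ell_t+D_+(\ell_t)$ if $a_t=+1$ and $\ell_{t+1}=\ell_t+D_-(\ell_t)$ if $a_t=-1$, where $D_+(x)=\log\frac{1-G_+(-x)}{1-G_-(-x)}$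 and $D_-(x)=\log\frac{G_+(-x)}{G_-(-x)}$. We write $\mathbb{P}_+(\cdot)=\mathbb{P}(\cdot\mid\theta=+1)$ and $\mathbb{E}_+$ for the corresponding expectation. There is an upset at time $t\ge2$ if $a_{t-1}\ne a_t$. $\Xi=|\{t\ge 2: a_{t-1}\ne a_t\}|$ is the total number of upsets. *)

(* Defs.v *)
From Stdlib Require Import Reals List.
Import ListNotations.
Open Scope R_scope.

Definition is_cdf (G : R -> R) : Prop :=
  (forall x y, x <= y -> G x <= G y) /\
  (forall x eps, 0 < eps -> exists d, 0 < d /\
       forall y, x <= y < x + d -> G y - G x < eps) /\
  (forall eps, 0 < eps -> exists M, forall x, x <= M -> G x < eps) /\
  (forall eps, 0 < eps -> exists M, forall x, M <= x -> 1 - eps < G x).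

(* (Gp, Gm) are the conditional CDFs of the private log-likelihood ratio
   L = log dF_+/dF_- (s) of a signal s with mutually absolutely continuous
   conditional laws F_+, F_- and uniform prior: this holds iff
   dG_-(l) = exp(-l) dG_+(l), which (for CDFs) is equivalent to the
   following bound on every interval (a,b]. *)
Definition llr_pair (Gp Gm : R -> R) : Prop :=
  is_cdf Gp /\ is_cdf Gm /\
  forall a b, a < b ->
    exp (- b) * (Gp b - Gp a) <= Gm b - Gm a /\
    Gm b - Gm a <= exp (- a) * (Gp b - Gp a).

(* Unbounded signals: P(L > M) > 0 and P(L < -M) > 0 for every M,
   where P = (P_+ + P_-)/2. *)
Definition unbounded_signals (Gp Gm : R -> R) : Prop :=
  (forall M, 0 < (1 - Gp M) + (1 - Gm M)) /\
  (forall M, exists x, x < - M /\ 0 < Gp x + Gm x).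

(* actions: true = +1, false = -1 *)
Definition Dplus (Gp Gm : R -> R) (x : R) : R :=
  ln ((1 - Gp (- x)) / (1 - Gm (- x))).
Definition Dminus (Gp Gm : R -> R) (x : R) : R :=
  ln (Gp (- x) / Gm (- x)).

Definition next_belief (Gp Gm : R -> R) (l : R) (a : bool) : R :=
  if a then l + Dplus Gp Gm l else l + Dminus Gp Gm l.

(* Probability, conditional on the state whose LLR-CDF is G, that the
   agents starting from public log-belief l take the actions s in order.
   Agent acts +1 iff l + L > 0, i.e. with probability 1 - G(-l). *)
Fixpoint path_prob (Gp Gm G : R -> R) (l : R) (s : list bool) : R :=
  match s with
  | [] => 1
  | a :: s' =>
      (if a then 1 - G (- l) else G (- l)) *
      path_prob Gp Gm G (next_belief Gp Gm l a) s'
  end.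

Definition seq_prob (Gp Gm : R -> R) (s : list bool) : R :=
  / 2 * path_prob Gp Gm Gp 0 s + / 2 * path_prob Gp Gm Gm 0 s.

Fixpoint upsets (s : list bool) : nat :=
  match s with
  | a :: ((b :: _) as s') => (if Bool.eqb a b then 0 else 1) + upsets s'
  | _ => 0
  end%nat.

Fixpoint all_seqs (T : nat) : list (list bool) :=
  match T with
  | O => [ [] ]
  | S T' => map (cons true) (all_seqs T') ++ map (cons false) (all_seqs T')
  end.

Definition prob_upsets_ge (Gp Gm : R -> R) (T n : nat) : R :=
  fold_right Rplus 0
    (map (seq_prob Gp Gm)
       (filter (fun s => Nat.leb n (upsets s)) (all_seqs T))).

(* Main.v *)
From Pilot Require Import Defs.
From Stdlib Require Import Reals List Lra Lia Psatz.
Import ListNotations.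
Open Scope R_scope.

Lemma le_eps (a b : R) : (forall eps, 0 < eps -> a < b + eps) -> a <= b.
Proof.
  intros H. destruct (Rle_dec a b) as [h|h]; auto.
  exfalso. assert (h' : 0 < a - b) by lra. specialize (H _ h'). lra.
Qed.

Section G.
Lemma mono_p Gp Gm : llr_pair Gp Gm -> forall x y, x <= y -> Gp x <= Gp y.
Proof. intros [[m _] _]; exact m. Qed.
Lemma mono_m Gp Gm : llr_pair Gp Gm -> forall x y, x <= y -> Gm x <= Gm y.
Proof. intros [_ [[m _] _]]; exact m. Qed.
Lemma intv Gp Gm : llr_pair Gp Gm -> forall a b, a < b ->
    exp (- b) * (Gp b - Gp a) <= Gm b - Gm a /\
    Gm b - Gm a <= exp (- a) * (Gp b - Gp a).
Proof. intros [_ [_ I]]; exact I. Qed.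
Lemma low_p Gp Gm : llr_pair Gp Gm -> forall eps, 0 < eps -> exists M, forall x, x <= M -> Gp x < eps.
Proof. intros [[_ [_ [l _]]] _]; exact l. Qed.
Lemma low_m Gp Gm : llr_pair Gp Gm -> forall eps, 0 < eps -> exists M, forall x, x <= M -> Gm x < eps.
Proof. intros [_ [[_ [_ [l _]]] _]]; exact l. Qed.
Lemma up_p Gp Gm : llr_pair Gp Gm -> forall eps, 0 < eps -> exists M, forall x, M <= x -> 1 - eps < Gp x.
Proof. intros [[_ [_ [_ l]]] _]; exact l. Qed.
Lemma up_m Gp Gm : llr_pair Gp Gm -> forall eps, 0 < eps -> exists M, forall x, M <= x -> 1 - eps < Gm x.
Proof. intros [_ [[_ [_ [_ l]]] _]]; exact l. Qed.
End G.

Lemma Gnonneg Gp Gm : llr_pair Gp Gm -> unbounded_signals Gp Gm ->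
  forall x, 0 <= Gp x /\ 0 <= Gm x.
Proof.
  intros H [U1 U2] x.
  pose proof (mono_p _ _ H) as mp. pose proof (mono_m _ _ H) as mm.
  split.
  - destruct (Rle_dec 0 (Gp x)) as [h|h]; auto. exfalso.
    destruct (low_m _ _ H (- Gp x)) as [M HM]; [lra|].
    destruct (U2 (Rmax (-x) (-M))) as [y [hy hs]].
    assert (y <= x) by (generalize (Rmax_l (-x) (-M)); lra).
    assert (y <= M) by (generalize (Rmax_r (-x) (-M)); lra).
    specialize (mp y x H0). specialize (HM y H1). lra.
  - destruct (Rle_dec 0 (Gm x)) as [h|h]; auto. exfalso.
    destruct (low_p _ _ H (- Gm x)) as [M HM]; [lra|].
    destruct (U2 (Rmax (-x) (-M))) as [y [hy hs]].
    assert (y <= x) by (generalize (Rmax_l (-x) (-M)); lra).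
    assert (y <= M) by (generalize (Rmax_r (-x) (-M)); lra).
    specialize (mm y x H0). specialize (HM y H1). lra.
Qed.

Lemma le1 Gp Gm : llr_pair Gp Gm -> unbounded_signals Gp Gm ->
  forall x, Gp x <= 1 /\ Gm x <= 1.
Proof.
  intros H [U1 U2] x.
  pose proof (mono_p _ _ H) as mp. pose proof (mono_m _ _ H) as mm.
  split.
  - destruct (Rle_dec (Gp x) 1) as [h|h]; auto. exfalso.
    destruct (up_m _ _ H (Gp x - 1)) as [M HM]; [lra|].
    pose proof (mp x (Rmax x M) (Rmax_l _ _)).
    pose proof (HM (Rmax x M) (Rmax_r _ _)).
    pose proof (U1 (Rmax x M)). lra.
  - destruct (Rle_dec (Gm x) 1) as [h|h]; auto. exfalso.
    destruct (up_p _ _ H (Gm x - 1)) as [M HM]; [lra|].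
    pose proof (mm x (Rmax x M) (Rmax_l _ _)).
    pose proof (HM (Rmax x M) (Rmax_r _ _)).
    pose proof (U1 (Rmax x M)). lra.
Qed.

Lemma G2 Gp Gm : llr_pair Gp Gm -> unbounded_signals Gp Gm ->
  forall y, Gp y <= exp y * Gm y.
Proof.
  intros H U y. apply le_eps. intros eps he.
  destruct (low_p _ _ H eps he) as [M HM].
  set (a := Rmin M (y - 1)).
  assert (ha : a < y) by (unfold a; generalize (Rmin_r M (y-1)); lra).
  destruct (intv _ _ H a y ha) as [I _].
  pose proof (HM a (Rmin_l _ _)).
  pose proof (proj2 (Gnonneg _ _ H U a)).
  assert (E : exp y * exp (- y) = 1) by (rewrite <- exp_plus, Rplus_opp_r; apply exp_0).
  pose proof (exp_pos y).
  assert (exp y * (exp (-y) * (Gp y - Gp a)) <= exp y * (Gm y - Gm a))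
    by (apply Rmult_le_compat_l; lra).
  assert (exp y * (exp (-y) * (Gp y - Gp a)) = Gp y - Gp a).
  { rewrite <- Rmult_assoc, E; ring. }
  assert (0 <= exp y * Gm a) by (apply Rmult_le_pos; lra).
  nra.
Qed.

Lemma G1 Gp Gm : llr_pair Gp Gm -> unbounded_signals Gp Gm ->
  forall y, 1 - Gm y <= exp (- y) * (1 - Gp y).
Proof.
  intros H U y. apply le_eps. intros eps he.
  destruct (up_m _ _ H eps he) as [M HM].
  set (b := Rmax M (y + 1)).
  assert (hb : y < b) by (unfold b; generalize (Rmax_r M (y+1)); lra).
  destruct (intv _ _ H y b hb) as [_ I].
  pose proof (HM b (Rmax_l _ _)).
  pose proof (proj1 (le1 _ _ H U b)).
  pose proof (exp_pos (- y)).
  assert (exp (-y) * (Gp b - Gp y) <= exp (-y) * (1 - Gp y))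
    by (apply Rmult_le_compat_l; lra).
  lra.
Qed.

Lemma Gpos Gp Gm : llr_pair Gp Gm -> unbounded_signals Gp Gm ->
  forall x, 0 < Gp x /\ 0 < Gm x.
Proof.
  intros H U x. pose proof U as [U1 U2].
  pose proof (mono_p _ _ H) as mp. pose proof (mono_m _ _ H) as mm.
  assert (hs : 0 < Gp x + Gm x).
  { destruct (U2 (-x)) as [y [hy hs]].
    pose proof (mp y x ltac:(lra)). pose proof (mm y x ltac:(lra)). lra. }
  pose proof (Gnonneg _ _ H U x) as [n1 n2].
  assert (hm : 0 < Gm x).
  { destruct (Rlt_dec 0 (Gm x)) as [h|h]; auto. exfalso.
    assert (Gm x = 0) by lra. pose proof (G2 _ _ H U x). rewrite H0 in H1. lra. }
  split; auto.
  destruct (Rlt_dec 0 (Gp x)) as [h|h]; auto. exfalso.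
  assert (e0 : Gp x = 0) by lra.
  destruct (low_m _ _ H (Gm x) hm) as [M HM].
  set (a := Rmin M (x - 1)).
  assert (ha : a < x) by (unfold a; generalize (Rmin_r M (x-1)); lra).
  destruct (intv _ _ H a x ha) as [_ I].
  pose proof (HM a (Rmin_l _ _)).
  pose proof (proj1 (Gnonneg _ _ H U a)). pose proof (mp a x ltac:(lra)).
  assert (Gp x - Gp a = 0) by lra. rewrite H3, Rmult_0_r in I. lra.
Qed.

Lemma Glt1 Gp Gm : llr_pair Gp Gm -> unbounded_signals Gp Gm ->
  forall x, Gp x < 1 /\ Gm x < 1.
Proof.
  intros H U x. pose proof U as [U1 U2].
  pose proof (mono_p _ _ H) as mp. pose proof (mono_m _ _ H) as mm.
  pose proof (U1 x) as hs.
  pose proof (le1 _ _ H U x) as [n1 n2].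
  assert (hp : Gp x < 1).
  { destruct (Rlt_dec (Gp x) 1) as [h|h]; auto. exfalso.
    assert (e : 1 - Gp x = 0) by lra. pose proof (G1 _ _ H U x). rewrite e, Rmult_0_r in H0. lra. }
  split; auto.
  destruct (Rlt_dec (Gm x) 1) as [h|h]; auto. exfalso.
  destruct (up_p _ _ H (1 - Gp x)) as [M HM]; [lra|].
  set (b := Rmax M (x + 1)).
  assert (hb : x < b) by (unfold b; generalize (Rmax_r M (x+1)); lra).
  destruct (intv _ _ H x b hb) as [I _].
  pose proof (HM b (Rmax_l _ _)).
  pose proof (proj2 (le1 _ _ H U b)).
  pose proof (exp_pos (- b)).
  assert (0 < exp (-b) * (Gp b - Gp x)) by (apply Rmult_lt_0_compat; lra).
  lra.
Qed.

Lemma exp_m1 : 0 < exp (-1) < 1.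
Proof. split. apply exp_pos. rewrite <- exp_0. apply exp_increasing. lra. Qed.

Lemma alg1 A m E k : 0 <= k -> k <= A -> 0 <= m -> A + m <= 1 -> 1 <= E ->
  A - k + E*m <= (1-k)*E*(A+m).
Proof.
  intros. assert (0 <= (E-1)*(A-k*(A+m))).
  { apply Rmult_le_pos; nra. }
  assert (0 <= k*(1-(A+m))) by (apply Rmult_le_pos; lra). nra.
Qed.

Lemma alg2 B m E k : 0 <= k -> k <= B -> 0 <= m -> B + m <= 1 -> 0 <= E -> E <= 1 ->
  E*(B-k) + m <= (1-k)*(B+m).
Proof.
  intros. assert (0 <= (1-E)*(B-k)) by (apply Rmult_le_pos; lra).
  assert (0 <= k*(1-(B+m))) by (apply Rmult_le_pos; lra). nra.
Qed.

Definition kap (Gp : R -> R) := (1 - exp (-1)) * (1 - Gp 1).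
Definition kap' (Gm : R -> R) := (1 - exp (-1)) * Gm (-1).

Lemma kap_pos Gp Gm : llr_pair Gp Gm -> unbounded_signals Gp Gm ->
  0 < kap Gp <= 1 - Gp 0 /\ 0 < kap' Gm <= Gm 0.
Proof.
  intros H U. unfold kap, kap'. pose proof exp_m1.
  pose proof (Glt1 _ _ H U 1). pose proof (Gpos _ _ H U (-1)).
  pose proof (mono_p _ _ H 0 1 ltac:(lra)). pose proof (mono_m _ _ H (-1) 0 ltac:(lra)).
  split; split; try (apply Rmult_lt_0_compat; lra); nra.
Qed.

Lemma F4a Gp Gm : llr_pair Gp Gm -> unbounded_signals Gp Gm ->
  forall x, x <= 0 -> 1 - Gm x <= (1 - kap Gp) * exp (- x) * (1 - Gp x).
Proof.
  intros H U x hx. pose proof (kap_pos _ _ H U) as [[k1 k2] _].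
  destruct (intv _ _ H 0 1 ltac:(lra)) as [_ h1]. rewrite Ropp_0, exp_0 in h1.
  pose proof (G1 _ _ H U 1) as h2.
  assert (h3 : Gm 0 - Gm x <= exp (- x) * (Gp 0 - Gp x)).
  { destruct (Rlt_dec x 0) as [h|h].
    - exact (proj2 (intv _ _ H x 0 h)).
    - assert (x = 0) by lra. subst. lra. }
  assert (hE : 1 <= exp (- x)).
  { destruct (Rlt_dec x 0) as [h|h].
    - rewrite <- exp_0. left. apply exp_increasing. lra.
    - assert (x = 0) by lra. subst. rewrite Ropp_0, exp_0. lra. }
  pose proof (Gnonneg _ _ H U x). pose proof (mono_p _ _ H x 0 hx).
  pose proof (alg1 (1 - Gp 0) (Gp 0 - Gp x) (exp (-x)) (kap Gp)) as HA.
  unfold kap in *. 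
  replace (1 - Gp 0 + (Gp 0 - Gp x)) with (1 - Gp x) in HA by ring.
  replace (- (1)) with (-1) in h2 by ring.
  assert (1 - Gm x <= 1 - Gp 0 - (1 - exp (-1)) * (1 - Gp 1) + exp (- x) * (Gp 0 - Gp x)) by lra.
  lra.
Qed.

Lemma F4b Gp Gm : llr_pair Gp Gm -> unbounded_signals Gp Gm ->
  forall x, 0 <= x -> exp (- x) * Gp x <= (1 - kap' Gm) * Gm x.
Proof.
  intros H U x hx. pose proof (kap_pos _ _ H U) as [_ [k1 k2]].
  destruct (intv _ _ H (-1) 0 ltac:(lra)) as [h1 _]. rewrite Ropp_0, exp_0 in h1.
  pose proof (G2 _ _ H U (-1)) as h2.
  assert (h3 : exp (- x) * (Gp x - Gp 0) <= Gm x - Gm 0).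
  { destruct (Rlt_dec 0 x) as [h|h].
    - exact (proj1 (intv _ _ H 0 x h)).
    - assert (x = 0) by lra. subst. lra. }
  assert (hE : exp (- x) <= 1).
  { destruct (Rlt_dec 0 x) as [h|h].
    - rewrite <- exp_0. left. apply exp_increasing. lra.
    - assert (x = 0) by lra. subst. rewrite Ropp_0, exp_0. lra. }
  pose proof (exp_pos (-x)).
  pose proof (le1 _ _ H U x). pose proof (mono_m _ _ H 0 x hx).
  pose proof (alg2 (Gm 0) (Gm x - Gm 0) (exp (-x)) (kap' Gm)) as HA.
  unfold kap' in *.
  replace (Gm 0 + (Gm x - Gm 0)) with (Gm x) in HA by ring.
  assert (Gp 0 <= Gm 0 - (1 - exp (-1)) * Gm (-1)) by lra.
  assert (exp (-x) * Gp 0 <= exp (-x) * (Gm 0 - (1 - exp (-1)) * Gm (-1)))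
    by (apply Rmult_le_compat_l; lra).
  lra.
Qed.

Lemma F3a Gp Gm : llr_pair Gp Gm -> unbounded_signals Gp Gm ->
  forall l, 1 - Gm (- l) <= exp l * (1 - Gp (- l)).
Proof. intros H U l. pose proof (G1 _ _ H U (- l)). rewrite Ropp_involutive in H0. exact H0. Qed.

Lemma F3b Gp Gm : llr_pair Gp Gm -> unbounded_signals Gp Gm ->
  forall l, exp l * Gp (- l) <= Gm (- l).
Proof.
  intros H U l. pose proof (G2 _ _ H U (- l)).
  assert (E : exp l * exp (- l) = 1) by (rewrite <- exp_plus, Rplus_opp_r; apply exp_0).
  pose proof (exp_pos l).
  assert (exp l * Gp (-l) <= exp l * (exp (-l) * Gm (-l))) by (apply Rmult_le_compat_l; lra).
  rewrite <- Rmult_assoc, E, Rmult_1_l in H2. exact H2.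
Qed.

Lemma exp_nbt Gp Gm : llr_pair Gp Gm -> unbounded_signals Gp Gm -> forall l,
  exp (next_belief Gp Gm l true) * (1 - Gm (- l)) = exp l * (1 - Gp (- l)).
Proof.
  intros H U l. unfold next_belief, Dplus.
  pose proof (Glt1 _ _ H U (-l)).
  rewrite exp_plus, exp_ln.
  - field. lra.
  - apply Rdiv_lt_0_compat; lra.
Qed.

Lemma exp_nbf Gp Gm : llr_pair Gp Gm -> unbounded_signals Gp Gm -> forall l,
  exp (next_belief Gp Gm l false) * Gm (- l) = exp l * Gp (- l).
Proof.
  intros H U l. unfold next_belief, Pilot.Defs.Dminus.
  pose proof (Gpos _ _ H U (-l)).
  rewrite exp_plus, exp_ln.
  - field. lra.
  - apply Rdiv_lt_0_compat; lra.
Qed.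

Lemma nbt_ge1 Gp Gm : llr_pair Gp Gm -> unbounded_signals Gp Gm -> forall l,
  1 <= exp (next_belief Gp Gm l true).
Proof.
  intros H U l. pose proof (exp_nbt _ _ H U l). pose proof (F3a _ _ H U l).
  pose proof (Glt1 _ _ H U (-l)). nra.
Qed.

Lemma nbf_le1 Gp Gm : llr_pair Gp Gm -> unbounded_signals Gp Gm -> forall l,
  exp (next_belief Gp Gm l false) <= 1.
Proof.
  intros H U l. pose proof (exp_nbf _ _ H U l). pose proof (F3b _ _ H U l).
  pose proof (Gpos _ _ H U (-l)). nra.
Qed.

Lemma ge0_of_exp x : 1 <= exp x -> 0 <= x.
Proof. intros h. destruct (Rle_dec 0 x); auto. exfalso.
  assert (exp x < exp 0) by (apply exp_increasing; lra). rewrite exp_0 in H. lra. Qed.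
Lemma le0_of_exp x : exp x <= 1 -> x <= 0.
Proof. intros h. destruct (Rle_dec x 0); auto. exfalso.
  assert (exp 0 < exp x) by (apply exp_increasing; lra). rewrite exp_0 in H. lra. Qed.

Definition sumR (l : list R) := fold_right Rplus 0 l.
Definition SA (T : nat) (f : list bool -> R) := sumR (map f (all_seqs T)).

Lemma sumR_app l1 l2 : sumR (l1 ++ l2) = sumR l1 + sumR l2.
Proof. induction l1; simpl; [lra|]. unfold sumR in *. simpl. rewrite IHl1. lra. Qed.

Lemma SA_S T f : SA (S T) f = SA T (fun s => f (true :: s)) + SA T (fun s => f (false :: s)).
Proof. unfold SA. simpl. rewrite map_app, sumR_app, !map_map. reflexivity. Qed.

Lemma SA_ext T f g : (forall s, f s = g s) -> SA T f = SA T g.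
Proof. intros h. unfold SA. rewrite (map_ext f g h). reflexivity. Qed.

Lemma sumR_scal (c : R) (f : list bool -> R) l :
  sumR (map (fun s => c * f s) l) = c * sumR (map f l).
Proof. induction l; unfold sumR in *; simpl; [ring|]. rewrite IHl. ring. Qed.

Lemma SA_scal T c f : SA T (fun s => c * f s) = c * SA T f.
Proof. apply sumR_scal. Qed.

Lemma sumR_filter (P : list bool -> bool) (g : list bool -> R) l :
  sumR (map g (filter P l)) = sumR (map (fun s => if P s then g s else 0) l).
Proof. induction l; simpl; auto. destruct (P a); unfold sumR in *; simpl; rewrite IHl; ring. Qed.

Definition Zw Gp Gm l s := exp l * path_prob Gp Gm Gp l s + path_prob Gp Gm Gm l s.

Lemma Z_true Gp Gm : llr_pair Gp Gm -> unbounded_signals Gp Gm -> forall l s,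
  Zw Gp Gm l (true :: s) = (1 - Gm (- l)) * Zw Gp Gm (next_belief Gp Gm l true) s.
Proof.
  intros H U l s. unfold Zw.
  change (path_prob Gp Gm Gp l (true :: s)) with ((1 - Gp (-l)) * path_prob Gp Gm Gp (next_belief Gp Gm l true) s).
  change (path_prob Gp Gm Gm l (true :: s)) with ((1 - Gm (-l)) * path_prob Gp Gm Gm (next_belief Gp Gm l true) s).
  pose proof (exp_nbt _ _ H U l) as e.
  set (pp := path_prob Gp Gm Gp (next_belief Gp Gm l true) s).
  set (pm := path_prob Gp Gm Gm (next_belief Gp Gm l true) s).
  transitivity ((exp l * (1 - Gp (-l))) * pp + (1 - Gm (-l)) * pm); [ring|].
  rewrite <- e. ring.
Qed.

Lemma Z_false Gp Gm : llr_pair Gp Gm -> unbounded_signals Gp Gm -> forall l s,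
  Zw Gp Gm l (false :: s) = Gm (- l) * Zw Gp Gm (next_belief Gp Gm l false) s.
Proof.
  intros H U l s. unfold Zw.
  change (path_prob Gp Gm Gp l (false :: s)) with (Gp (-l) * path_prob Gp Gm Gp (next_belief Gp Gm l false) s).
  change (path_prob Gp Gm Gm l (false :: s)) with (Gm (-l) * path_prob Gp Gm Gm (next_belief Gp Gm l false) s).
  pose proof (exp_nbf _ _ H U l) as e.
  set (pp := path_prob Gp Gm Gp (next_belief Gp Gm l false) s).
  set (pm := path_prob Gp Gm Gm (next_belief Gp Gm l false) s).
  transitivity ((exp l * Gp (-l)) * pp + Gm (-l) * pm); [ring|].
  rewrite <- e. ring.
Qed.

Definition Uf Gp Gm T n l (a : bool) :=
  SA T (fun s => if Nat.leb n (upsets (a :: s)) then Zw Gp Gm l s else 0).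

Lemma upsets2 a b s : upsets (a :: b :: s) = ((if Bool.eqb a b then 0 else 1) + upsets (b :: s))%nat.
Proof. reflexivity. Qed.

Lemma leb_sub1 n u : Nat.leb n (1 + u) = Nat.leb (n - 1) u.
Proof.
  destruct (Nat.leb n (1+u)) eqn:E1; destruct (Nat.leb (n-1) u) eqn:E2; auto.
  - apply Nat.leb_le in E1. apply Nat.leb_gt in E2. lia.
  - apply Nat.leb_gt in E1. apply Nat.leb_le in E2. lia.
Qed.

Lemma U_S Gp Gm : llr_pair Gp Gm -> unbounded_signals Gp Gm -> forall T n l a,
  Uf Gp Gm (S T) n l a =
  (1 - Gm (- l)) * Uf Gp Gm T (if a then n else n - 1)%nat (next_belief Gp Gm l true) true +
  Gm (- l) * Uf Gp Gm T (if a then n - 1 else n)%nat (next_belief Gp Gm l false) false.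
Proof.
  intros H U T n l a. unfold Uf. rewrite SA_S. f_equal.
  - rewrite <- SA_scal. apply SA_ext. intro s. rewrite upsets2, (Z_true _ _ H U).
    destruct a; simpl Bool.eqb; cbv iota.
    + rewrite Nat.add_0_l. destruct (Nat.leb n (upsets (true :: s))); ring.
    + rewrite leb_sub1. destruct (Nat.leb (n-1) (upsets (true :: s))); ring.
  - rewrite <- SA_scal. apply SA_ext. intro s. rewrite upsets2, (Z_false _ _ H U).
    destruct a; simpl Bool.eqb; cbv iota.
    + rewrite leb_sub1. destruct (Nat.leb (n-1) (upsets (false :: s))); ring.
    + rewrite Nat.add_0_l. destruct (Nat.leb n (upsets (false :: s))); ring.
Qed.

Lemma split_total Gp Gm : llr_pair Gp Gm -> unbounded_signals Gp Gm -> forall l,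
  (1 - Gm (- l)) * (1 + exp (next_belief Gp Gm l true)) +
  Gm (- l) * (1 + exp (next_belief Gp Gm l false)) = 1 + exp l.
Proof.
  intros H U l. pose proof (exp_nbt _ _ H U l). pose proof (exp_nbf _ _ H U l). nra.
Qed.

Lemma U_total Gp Gm : llr_pair Gp Gm -> unbounded_signals Gp Gm -> forall T l a,
  Uf Gp Gm T 0 l a = 1 + exp l.
Proof.
  intros H U T. induction T; intros l a.
  - unfold Uf, SA, sumR, Zw. simpl. ring.
  - rewrite (U_S _ _ H U). destruct a; simpl; rewrite !IHT; apply (split_total _ _ H U).
Qed.

Lemma U0 Gp Gm : forall n l a, (0 < n)%nat -> Uf Gp Gm 0 n l a = 0.
Proof.
  intros n l a hn. unfold Uf, SA, sumR. simpl.
  destruct n; [lia|]. simpl. ring.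
Qed.

Lemma V_true Gp Gm : llr_pair Gp Gm -> unbounded_signals Gp Gm -> forall T l,
  Uf Gp Gm T 1 l true <= 2.
Proof.
  intros H U T. induction T; intro l.
  - rewrite U0; [lra|lia].
  - rewrite (U_S _ _ H U). cbv iota; rewrite ?Nat.sub_diag. rewrite (U_total _ _ H U).
    pose proof (IHT (next_belief Gp Gm l true)).
    pose proof (Gpos _ _ H U (-l)). pose proof (Glt1 _ _ H U (-l)).
    pose proof (nbf_le1 _ _ H U l).
    assert ((1 - Gm (-l)) * Uf Gp Gm T 1 (next_belief Gp Gm l true) true <= (1 - Gm (-l)) * 2)
      by (apply Rmult_le_compat_l; lra).
    assert (Gm (-l) * (1 + exp (next_belief Gp Gm l false)) <= Gm (-l) * 2)
      by (apply Rmult_le_compat_l; lra).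
    lra.
Qed.

Lemma V_false Gp Gm : llr_pair Gp Gm -> unbounded_signals Gp Gm -> forall T l,
  Uf Gp Gm T 1 l false <= 2 * exp l.
Proof.
  intros H U T. induction T; intro l.
  - rewrite U0; [|lia]. pose proof (exp_pos l). lra.
  - rewrite (U_S _ _ H U). cbv iota; rewrite ?Nat.sub_diag. rewrite (U_total _ _ H U).
    pose proof (IHT (next_belief Gp Gm l false)).
    pose proof (Gpos _ _ H U (-l)). pose proof (Glt1 _ _ H U (-l)).
    pose proof (exp_nbt _ _ H U l). pose proof (exp_nbf _ _ H U l).
    pose proof (F3a _ _ H U l).
    assert (Gm (-l) * Uf Gp Gm T 1 (next_belief Gp Gm l false) false <=
            Gm (-l) * (2 * exp (next_belief Gp Gm l false)))
      by (apply Rmult_le_compat_l; lra).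
    nra.
Qed.

Definition eps0 Gp Gm := Rmin (kap Gp * (1 - Gp 0)) (kap' Gm * Gm 0).

Lemma eps0_bounds Gp Gm : llr_pair Gp Gm -> unbounded_signals Gp Gm ->
  0 < eps0 Gp Gm <= 1 /\ eps0 Gp Gm <= kap Gp * (1 - Gp 0) /\ eps0 Gp Gm <= kap' Gm * Gm 0.
Proof.
  intros H U. pose proof (kap_pos _ _ H U) as [[a1 a2] [b1 b2]].
  pose proof (Glt1 _ _ H U 0). pose proof (Gpos _ _ H U 0).
  unfold eps0. split; [split|split].
  - apply Rmin_glb_lt; apply Rmult_lt_0_compat; lra.
  - eapply Rle_trans; [apply Rmin_l|]. nra.
  - apply Rmin_l.
  - apply Rmin_r.
Qed.

Lemma A_true Gp Gm : llr_pair Gp Gm -> unbounded_signals Gp Gm -> forall T l, 0 <= l ->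
  Uf Gp Gm T 1 l true <= (1 - eps0 Gp Gm / 2) * (1 + exp l).
Proof.
  intros H U T l hl. pose proof (eps0_bounds _ _ H U) as [[e1 e2] [e3 _]].
  pose proof (exp_pos l).
  assert (hE : 1 <= exp l) by (rewrite <- exp_0; destruct hl; [left; apply exp_increasing; lra| subst; lra]).
  destruct T.
  - rewrite U0; [|lia]. nra.
  - rewrite (U_S _ _ H U). cbv iota; rewrite ?Nat.sub_diag. rewrite (U_total _ _ H U).
    pose proof (V_true _ _ H U T (next_belief Gp Gm l true)) as hv.
    pose proof (Gpos _ _ H U (-l)). pose proof (Glt1 _ _ H U (-l)).
    pose proof (exp_nbt _ _ H U l). pose proof (exp_nbf _ _ H U l).
    pose proof (F4a _ _ H U (-l) ltac:(lra)) as f4. rewrite Ropp_involutive in f4.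
    pose proof (kap_pos _ _ H U) as [[k1 k2] _].
    pose proof (mono_p _ _ H (-l) 0 ltac:(lra)).
    assert ((1 - Gm (-l)) * Uf Gp Gm T 1 (next_belief Gp Gm l true) true <= (1 - Gm (-l)) * 2)
      by (apply Rmult_le_compat_l; lra).
    set (PO := exp l * (1 - Gp (-l))) in *.
    assert (kap Gp * (exp l * (1 - Gp 0)) <= kap Gp * PO).
    { apply Rmult_le_compat_l; [lra|]. unfold PO. apply Rmult_le_compat_l; lra. }
    assert (eps0 Gp Gm * exp l <= kap Gp * (1 - Gp 0) * exp l) by (apply Rmult_le_compat_r; lra).
    assert (eps0 Gp Gm * (1 + exp l) <= eps0 Gp Gm * (2 * exp l)) by (apply Rmult_le_compat_l; lra).
    assert (1 - Gm (-l) <= PO - kap Gp * PO) by (unfold PO in *; nra).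
    nra.
Qed.

Lemma A_false Gp Gm : llr_pair Gp Gm -> unbounded_signals Gp Gm -> forall T l, l <= 0 ->
  Uf Gp Gm T 1 l false <= (1 - eps0 Gp Gm / 2) * (1 + exp l).
Proof.
  intros H U T l hl. pose proof (eps0_bounds _ _ H U) as [[e1 e2] [_ e3]].
  pose proof (exp_pos l).
  assert (hE : exp l <= 1) by (rewrite <- exp_0; destruct hl; [left; apply exp_increasing; lra| subst; lra]).
  destruct T.
  - rewrite U0; [|lia]. nra.
  - rewrite (U_S _ _ H U). cbv iota; rewrite ?Nat.sub_diag. rewrite (U_total _ _ H U).
    pose proof (V_false _ _ H U T (next_belief Gp Gm l false)) as hv.
    pose proof (Gpos _ _ H U (-l)). pose proof (Glt1 _ _ H U (-l)).
    pose proof (exp_nbt _ _ H U l). pose proof (exp_nbf _ _ H U l).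
    pose proof (F4b _ _ H U (-l) ltac:(lra)) as f4. rewrite Ropp_involutive in f4.
    pose proof (kap_pos _ _ H U) as [_ [k1 k2]].
    pose proof (mono_m _ _ H 0 (-l) ltac:(lra)).
    assert (Gm (-l) * Uf Gp Gm T 1 (next_belief Gp Gm l false) false <=
            Gm (-l) * (2 * exp (next_belief Gp Gm l false)))
      by (apply Rmult_le_compat_l; lra).
    assert (kap' Gm * Gm 0 <= kap' Gm * Gm (-l)) by (apply Rmult_le_compat_l; lra).
    assert (eps0 Gp Gm * (1 + exp l) <= eps0 Gp Gm * 2) by (apply Rmult_le_compat_l; lra).
    nra.
Qed.

Lemma U_nonneg Gp Gm : llr_pair Gp Gm -> unbounded_signals Gp Gm -> forall T n l a,
  0 <= Uf Gp Gm T n l a.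
Proof.
  intros H U T. induction T; intros n l a.
  - unfold Uf, SA, sumR, Zw. simpl. destruct (Nat.leb n 0); pose proof (exp_pos l); lra.
  - rewrite (U_S _ _ H U). pose proof (Gpos _ _ H U (-l)). pose proof (Glt1 _ _ H U (-l)).
    apply Rplus_le_le_0_compat; apply Rmult_le_pos; try lra; apply IHT.
Qed.

Lemma B_bound Gp Gm : llr_pair Gp Gm -> unbounded_signals Gp Gm -> forall m T l a,
  Uf Gp Gm T (S m) l a <= (1 - eps0 Gp Gm / 2) ^ m * Uf Gp Gm T 1 l a.
Proof.
  intros H U. pose proof (eps0_bounds _ _ H U) as [[e1 e2] _].
  set (b := 1 - eps0 Gp Gm / 2).
  assert (hb : 0 <= b) by (unfold b; lra).
  induction m; intros T l a.
  - simpl. lra.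
  - induction T in l, a |- *.
    + rewrite !U0; try lia. lra.
    + rewrite !(U_S _ _ H U).
      pose proof (Gpos _ _ H U (-l)). pose proof (Glt1 _ _ H U (-l)).
      pose proof (pow_le b m hb).
      pose proof (ge0_of_exp _ (nbt_ge1 _ _ H U l)) as ht.
      pose proof (le0_of_exp _ (nbf_le1 _ _ H U l)) as hf.
      destruct a; cbv iota; rewrite ?Nat.sub_diag;
        replace (S (S m) - 1)%nat with (S m) by lia; simpl pow.
      * pose proof (IHT (next_belief Gp Gm l true) true) as i1.
        pose proof (IHm T (next_belief Gp Gm l false) false) as i2.
        pose proof (A_false _ _ H U T _ hf) as a2. fold b in a2.
        rewrite <- (U_total _ _ H U T _ false) in a2.
        assert (Uf Gp Gm T (S m) (next_belief Gp Gm l false) false <=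
                b * b ^ m * Uf Gp Gm T 0 (next_belief Gp Gm l false) false).
        { eapply Rle_trans; [exact i2|].
          replace (b * b ^ m * Uf Gp Gm T 0 (next_belief Gp Gm l false) false) with
            (b ^ m * (b * Uf Gp Gm T 0 (next_belief Gp Gm l false) false)) by ring.
          apply Rmult_le_compat_l; lra. }
        simpl pow in i1.
        assert ((1 - Gm (-l)) * Uf Gp Gm T (S (S m)) (next_belief Gp Gm l true) true <=
                (1 - Gm (-l)) * (b * b ^ m * Uf Gp Gm T 1 (next_belief Gp Gm l true) true))
          by (apply Rmult_le_compat_l; lra).
        assert (Gm (-l) * Uf Gp Gm T (S m) (next_belief Gp Gm l false) false <=
                Gm (-l) * (b * b ^ m * Uf Gp Gm T 0 (next_belief Gp Gm l false) false))
          by (apply Rmult_le_compat_l; lra).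
        lra.
      * pose proof (IHT (next_belief Gp Gm l false) false) as i1.
        pose proof (IHm T (next_belief Gp Gm l true) true) as i2.
        pose proof (A_true _ _ H U T _ ht) as a2. fold b in a2.
        rewrite <- (U_total _ _ H U T _ true) in a2.
        assert (Uf Gp Gm T (S m) (next_belief Gp Gm l true) true <=
                b * b ^ m * Uf Gp Gm T 0 (next_belief Gp Gm l true) true).
        { eapply Rle_trans; [exact i2|].
          replace (b * b ^ m * Uf Gp Gm T 0 (next_belief Gp Gm l true) true) with
            (b ^ m * (b * Uf Gp Gm T 0 (next_belief Gp Gm l true) true)) by ring.
          apply Rmult_le_compat_l; lra. }
        simpl pow in i1.
        assert (Gm (-l) * Uf Gp Gm T (S (S m)) (next_belief Gp Gm l false) false <=
                Gm (-l) * (b * b ^ m * Uf Gp Gm T 1 (next_belief Gp Gm l false) false))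
          by (apply Rmult_le_compat_l; lra).
        assert ((1 - Gm (-l)) * Uf Gp Gm T (S m) (next_belief Gp Gm l true) true <=
                (1 - Gm (-l)) * (b * b ^ m * Uf Gp Gm T 0 (next_belief Gp Gm l true) true))
          by (apply Rmult_le_compat_l; lra).
        lra.
Qed.

Lemma prob_eq Gp Gm T n : prob_upsets_ge Gp Gm T n =
  / 2 * SA T (fun s => if Nat.leb n (upsets s) then Zw Gp Gm 0 s else 0).
Proof.
  unfold prob_upsets_ge. fold (sumR (map (seq_prob Gp Gm) (filter (fun s => Nat.leb n (upsets s)) (all_seqs T)))).
  rewrite sumR_filter. rewrite <- SA_scal. unfold SA. f_equal. apply map_ext. intro s.
  destruct (Nat.leb n (upsets s)); unfold seq_prob, Zw; rewrite ?exp_0; ring.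
Qed.

Theorem proposition1 :
  forall Gp Gm : R -> R,
    llr_pair Gp Gm ->
    unbounded_signals Gp Gm ->
    exists c gamma : R,
      0 < c /\ 0 < gamma < 1 /\
      forall n : nat, (0 < n)%nat ->
        forall T : nat, prob_upsets_ge Gp Gm T n <= c * gamma ^ n.
Proof.
  intros Gp Gm H U. pose proof (eps0_bounds _ _ H U) as [[e1 e2] _].
  exists 1, (1 - eps0 Gp Gm / 2). split; [lra|]. split; [lra|].
  set (b := 1 - eps0 Gp Gm / 2).
  assert (hb : 0 <= b) by (unfold b; lra).
  intros n hn T. rewrite prob_eq. rewrite Rmult_1_l.
  destruct n as [|m]; [lia|].
  destruct T as [|T].
  - pose proof (pow_le b (S m) hb). unfold SA, sumR. cbn [all_seqs map fold_right upsets Nat.leb]. lra.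
  - rewrite SA_S.
    assert (E1 : SA T (fun s => if Nat.leb (S m) (upsets (true :: s)) then Zw Gp Gm 0 (true :: s) else 0)
               = (1 - Gm (-0)) * Uf Gp Gm T (S m) (next_belief Gp Gm 0 true) true).
    { unfold Uf. rewrite <- SA_scal. apply SA_ext. intro s. rewrite (Z_true _ _ H U).
      destruct (Nat.leb (S m) (upsets (true :: s))); ring. }
    assert (E2 : SA T (fun s => if Nat.leb (S m) (upsets (false :: s)) then Zw Gp Gm 0 (false :: s) else 0)
               = Gm (-0) * Uf Gp Gm T (S m) (next_belief Gp Gm 0 false) false).
    { unfold Uf. rewrite <- SA_scal. apply SA_ext. intro s. rewrite (Z_false _ _ H U).
      destruct (Nat.leb (S m) (upsets (false :: s))); ring. }
    rewrite E1, E2.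
    pose proof (Gpos _ _ H U (-0)). pose proof (Glt1 _ _ H U (-0)).
    pose proof (pow_le b m hb).
    pose proof (ge0_of_exp _ (nbt_ge1 _ _ H U 0)) as ht.
    pose proof (le0_of_exp _ (nbf_le1 _ _ H U 0)) as hf.
    pose proof (split_total _ _ H U 0) as st. rewrite exp_0 in st.
    assert (k1 : Uf Gp Gm T (S m) (next_belief Gp Gm 0 true) true <=
                 b ^ S m * (1 + exp (next_belief Gp Gm 0 true))).
    { eapply Rle_trans; [apply (B_bound _ _ H U)|]. fold b.
      apply Rle_trans with (b ^ m * (b * (1 + exp (next_belief Gp Gm 0 true)))).
      - apply Rmult_le_compat_l; [lra|]. apply (A_true _ _ H U); lra.
      - right. simpl. ring. }
    assert (k2 : Uf Gp Gm T (S m) (next_belief Gp Gm 0 false) false <=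
                 b ^ S m * (1 + exp (next_belief Gp Gm 0 false))).
    { eapply Rle_trans; [apply (B_bound _ _ H U)|]. fold b.
      apply Rle_trans with (b ^ m * (b * (1 + exp (next_belief Gp Gm 0 false)))).
      - apply Rmult_le_compat_l; [lra|]. apply (A_false _ _ H U); lra.
      - right. simpl. ring. }
    assert ((1 - Gm (-0)) * Uf Gp Gm T (S m) (next_belief Gp Gm 0 true) true <=
            (1 - Gm (-0)) * (b ^ S m * (1 + exp (next_belief Gp Gm 0 true))))
      by (apply Rmult_le_compat_l; lra).
    assert (Gm (-0) * Uf Gp Gm T (S m) (next_belief Gp Gm 0 false) false <=
            Gm (-0) * (b ^ S m * (1 + exp (next_belief Gp Gm 0 false))))
      by (apply Rmult_le_compat_l; lra).
    assert (e : (1 - Gm (-0)) * (b ^ S m * (1 + exp (next_belief Gp Gm 0 true))) +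
                Gm (-0) * (b ^ S m * (1 + exp (next_belief Gp Gm 0 false))) = b ^ S m * 2).
    { transitivity (b ^ S m * ((1 - Gm (-0)) * (1 + exp (next_belief Gp Gm 0 true)) +
        Gm (-0) * (1 + exp (next_belief Gp Gm 0 false)))); [ring|]. rewrite st. ring. }
    lra.
Qed.
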